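(* Let $\theta=(\{X_g\},\{\theta_g\})$ be an ordered partial action of a groupoid $\mathcal{G}$ on a semilatticeoid $X$ such that $X_g\neq\emptyset$ for every $g\in\mathcal{G}$. Let $(\eta,E,i)$ be the ordered globalization of $\theta$ given by the globalization construction (with the induced order on $E$). Then $(\mathcal{G},E,i(X))$ is a McAlister triple.
   Context: Inverse semigroupoid: arrows $\mathcal{S}$, objects $\mathcal{S}^{(0)}$, maps $d,c$, associative multiplication on $\mathcal{S}^{(2)}=\{(s,t):d(s)=c(t)\}$ with $d(st)=d(t)$, $c(st)=c(s)$, unique $s^*$ with $ss^*s=s$, $s^*ss^*=s^*$; $E(\mathcal{S})$ = idempotents; natural order on parallel arrows $s\leqslant t$ iff $s=te$ for an idempotent $e$ with $(t,e)\in\mathcal{S}^{(2)}$. A groupoid is an inverse semigroupoid with exactly one idempotent (the identity) over each object; the inverse of $g$ is written $g^{-1}$. A semilatticeoid is an inverse semigroupoid all of whose elements are idempotent (a disjoint union of meet semilattices, one per object), ordered by its natural order. A partial action of $\mathcal{S}$ on a set $X$ is a pair $(\{X_s\},\{\theta_s\})$, $X_s\subseteq X$, $\theta_s:X_{s^*}\to X_s$, with: each $\theta_s$ bijective, $\theta_s^{-1}=\theta_{s^*}$, $X=\bigcup_sX_s$; $\theta_s\circ\theta_t\subseteq\theta_{st}$ for $(s,t)\in\mathcal{S}^{(2)}$; $X_s\subseteq X_t$ if $s\leqslant t$. Global: $\theta_s\circ\theta_t=\theta_{st}$. Ordered (on a poset): each $X_s$ an order ideal, each $\theta_s$ an order isomorphism.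 Orbit of $Y\subseteq E$ under a global action $\eta$: $\bigcup_s\eta_s(Y\cap E_{s^*})$. A McAlister triple $(\mathcal{G},E,X)$ consists of a groupoid $\mathcal{G}$, a poset $E$, an order ideal $X$ of $E$ which is a semilatticeoid under the induced order, and an ordered global action $\eta$ of $\mathcal{G}$ on $E$ such that the orbit of $X$ is $E$ and $\eta_g(X\cap E_{g^{-1}})\cap X\neq\emptyset$ for all $g\in\mathcal{G}$. Globalization construction: $D=\{(s,x)\in\mathcal{S}\times X:x\in X_{s^*s}\}$; $(s,x)\sim(t,y)$ iff (R1) $(t^*,s)\in\mathcal{S}^{(2)}$, $x\in X_{s^*t}$, $\theta_{t^*s}(x)=y$, or (R2) $s,t\in E(\mathcal{S})$ and $x=y$; $\approx$ the equivalence relation generated by $\sim$; $E=D/{\approx}$ with classes $[s,x]$; $D_s=\{(p,x)\in D:(s^*,p)\in\mathcal{S}^{(2)},x\in X_{p^*ss^*p}\}$, $E_s=\{[p,x]:(p,x)\in D_s\}$, $\eta_s([p,x])=[sp,x]$ for $(p,x)\in D_{s^*}$; $i(x)=[e,x]$ for any idempotent $e$ with $x\in X_e$. Order on $E$: $[s,x]\leqslant[t,y]$ iff there exist $(r,y')\in D$, $x'\in X$ with $(r,y')\approx(t,y)$, $x'\leqslant y'$, $(r,x')\approx(s,x)$. It is known that then $\eta$ is an ordered global action on $E$, $i$ is an injective order embedding onto the order ideal $i(X)$, and the orbit of $i(X)$ is $E$. *)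

(* Defs.v *)
From Stdlib Require Import Relations.

Section InverseSemigroupoid.
Context {O A : Type} (d c : A -> O) (mul : A -> A -> A) (star : A -> A).

Definition composable (s t : A) : Prop := d s = c t.

(* Inverse semigroupoid axioms; [mul] is total but only meaningful on S^(2);
   [star s] is the unique s^* with s s^* s = s and s^* s s^* = s^*. *)
Record is_inv_semigroupoid : Prop := {
  isg_dom : forall s t, composable s t -> d (mul s t) = d t;
  isg_cod : forall s t, composable s t -> c (mul s t) = c s;
  isg_assoc : forall s t u, composable s t -> composable t u ->
      mul (mul s t) u = mul s (mul t u);
  isg_star_dom : forall s, d (star s) = c s;
  isg_star_cod : forall s, c (star s) = d s;
  isg_star1 : forall s, mul s (mul (star s) s) = s;
  isg_star2 : forall s, mul (star s) (mul s (star s)) = star s;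
  isg_star_uniq : forall s t, d t = c s -> c t = d s ->
      mul s (mul t s) = s -> mul t (mul s t) = t -> t = star s
}.

Definition idempotent (e : A) : Prop := composable e e /\ mul e e = e.

Definition natle (s t : A) : Prop :=
  d s = d t /\ c s = c t /\ exists e, idempotent e /\ composable t e /\ s = mul t e.

Definition is_groupoid : Prop :=
  is_inv_semigroupoid /\
  forall x : O, exists e, (idempotent e /\ d e = x) /\
     forall e', idempotent e' /\ d e' = x -> e' = e.

Definition is_semilatticeoid : Prop :=
  is_inv_semigroupoid /\ forall s, idempotent s.

Record partial_action {T : Type} (car : T -> Prop)
    (Xs : A -> T -> Prop) (th : A -> T -> T) : Prop := {
  pa_sub : forall s x, Xs s x -> car x;
  pa_maps : forall s x, Xs (star s) x -> Xs s (th s x);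
  pa_inj : forall s x y, Xs (star s) x -> Xs (star s) y -> th s x = th s y -> x = y;
  pa_surj : forall s y, Xs s y -> exists x, Xs (star s) x /\ th s x = y;
  pa_inv : forall s x, Xs (star s) x -> th (star s) (th s x) = x;
  pa_cover : forall x, car x -> exists s, Xs s x;
  (* theta_s o theta_t included in theta_st *)
  pa_comp : forall s t x, composable s t ->
      Xs (star t) x -> Xs (star s) (th t x) ->
      Xs (star (mul s t)) x /\ th (mul s t) x = th s (th t x);
  pa_mono : forall s t x, natle s t -> Xs s x -> Xs t x
}.

(* global: theta_s o theta_t = theta_st (equal domains as well) *)
Definition global_action {T : Type} (car : T -> Prop)
    (Xs : A -> T -> Prop) (th : A -> T -> T) : Prop :=
  partial_action car Xs th /\
  forall s t x, composable s t -> Xs (star (mul s t)) x ->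
     Xs (star t) x /\ Xs (star s) (th t x).

Definition ordered_action {T : Type} (car : T -> Prop) (le : T -> T -> Prop)
    (Xs : A -> T -> Prop) (th : A -> T -> T) : Prop :=
  (forall s x y, Xs s y -> car x -> le x y -> Xs s x) /\
  (forall s x y, Xs (star s) x -> Xs (star s) y ->
      (le x y <-> le (th s x) (th s y))).

End InverseSemigroupoid.

Definition partial_order_on {T : Type} (car : T -> Prop) (le : T -> T -> Prop) : Prop :=
  (forall x, car x -> le x x) /\
  (forall x y, car x -> car y -> le x y -> le y x -> x = y) /\
  (forall x y z, car x -> car y -> car z -> le x y -> le y z -> le x z).

(* A subset [Xsub] of a poset is a semilatticeoid under the induced order:
   there is a semilatticeoid whose arrows are in bijection with [Xsub] and
   whose natural order corresponds to the induced order. *)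
Definition semilatticeoid_under {T : Type} (Xsub : T -> Prop) (le : T -> T -> Prop) : Prop :=
  exists (O' A' : Type) (d' c' : A' -> O') (mul' : A' -> A' -> A') (star' : A' -> A')
         (f : A' -> T),
    is_semilatticeoid d' c' mul' star' /\
    (forall a, Xsub (f a)) /\
    (forall a b, f a = f b -> a = b) /\
    (forall t, Xsub t -> exists a, f a = t) /\
    (forall a b, natle d' c' mul' a b <-> le (f a) (f b)).

Definition mcalister_triple {O A T : Type} (d c : A -> O) (mul : A -> A -> A)
    (star : A -> A) (Ecar : T -> Prop) (le : T -> T -> Prop) (Xsub : T -> Prop)
    (Es : A -> T -> Prop) (eta : A -> T -> T) : Prop :=
  is_groupoid d c mul star /\
  partial_order_on Ecar le /\
  (forall x, Xsub x -> Ecar x) /\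
  (forall x y, Xsub y -> Ecar x -> le x y -> Xsub x) /\
  semilatticeoid_under Xsub le /\
  global_action d c mul star Ecar Es eta /\
  ordered_action star Ecar le Es eta /\
  (forall C, Ecar C <-> exists g y, Xsub y /\ Es (star g) y /\ C = eta g y) /\
  (forall g, exists y, Xsub y /\ Es (star g) y /\ Xsub (eta g y)).

Section Globalization.
Context {O A X : Type} (d c : A -> O) (mul : A -> A -> A) (star : A -> A)
  (Xs : A -> X -> Prop) (th : A -> X -> X) (leX : X -> X -> Prop).

Definition Dset (p : A * X) : Prop := Xs (mul (star (fst p)) (fst p)) (snd p).

Definition glob_sim (p q : A * X) : Prop :=
  Dset p /\ Dset q /\
  ( (d (star (fst q)) = c (fst p) /\
     Xs (mul (star (fst p)) (fst q)) (snd p) /\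
     th (mul (star (fst q)) (fst p)) (snd p) = snd q)
    \/ (idempotent d c mul (fst p) /\ idempotent d c mul (fst q) /\ snd p = snd q) ).

Definition glob_approx : relation (A * X) := clos_refl_sym_trans _ glob_sim.

Definition cls (p : A * X) : A * X -> Prop := glob_approx p.

(* E = D / approx, as a set of classes *)
Definition Ecar (C : A * X -> Prop) : Prop := exists p, Dset p /\ C = cls p.

Definition Dsub (s : A) (p : A * X) : Prop :=
  Dset p /\ d (star s) = c (fst p) /\
  Xs (mul (star (fst p)) (mul (mul s (star s)) (fst p))) (snd p).

Definition Es (s : A) (C : A * X -> Prop) : Prop := exists p, Dsub s p /\ C = cls p.

(* eta_s([p,x]) = [sp,x] for (p,x) in D_{s*} *)
Definition eta (s : A) (C : A * X -> Prop) : A * X -> Prop :=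
  fun q => exists p, C p /\ Dsub (star s) p /\ glob_approx (mul s (fst p), snd p) q.

(* i(x) = [e,x] for any idempotent e with x in X_e *)
Definition iota (x : X) : A * X -> Prop :=
  fun q => exists e, idempotent d c mul e /\ Xs e x /\ glob_approx (e, x) q.

Definition leE (C C' : A * X -> Prop) : Prop :=
  exists s x t y, Dset (s, x) /\ C = cls (s, x) /\ Dset (t, y) /\ C' = cls (t, y) /\
  exists r y' x', Dset (r, y') /\ glob_approx (r, y') (t, y) /\ leX x' y' /\
                  glob_approx (r, x') (s, x).

End Globalization.

(* Main.v *)
Require Import Defs.
From Stdlib Require Import Relations FunctionalExtensionality PropExtensionality.

Section Main.
Context {O A OX X : Type} (d c : A -> O) (mul : A -> A -> A) (star : A -> A)
  (dX cX : X -> OX) (mulX : X -> X -> X) (starX : X -> X)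
  (Xs : A -> X -> Prop) (th : A -> X -> X).
Context (HG : is_groupoid d c mul star) (HX : is_semilatticeoid dX cX mulX starX)
  (Hpa : partial_action d c mul star (fun _ : X => True) Xs th)
  (Hord : ordered_action star (fun _ : X => True) (natle dX cX mulX) Xs th).

Local Notation IDEM := (idempotent d c mul).
Local Notation LX := (natle dX cX mulX).

Let ISG := proj1 HG.

Lemma dm x y : d x = c y -> d (mul x y) = d y.
Proof. intro H. exact (isg_dom _ _ _ _ ISG x y H). Qed.
Lemma cm x y : d x = c y -> c (mul x y) = c x.
Proof. intro H. exact (isg_cod _ _ _ _ ISG x y H). Qed.
Lemma ds s : d (star s) = c s. Proof. exact (isg_star_dom _ _ _ _ ISG s). Qed.
Lemma cs s : c (star s) = d s. Proof. exact (isg_star_cod _ _ _ _ ISG s). Qed.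
Lemma asc x y z : d x = c y -> d y = c z -> mul (mul x y) z = mul x (mul y z).
Proof. intros H1 H2. exact (isg_assoc _ _ _ _ ISG x y z H1 H2). Qed.
Lemma st1 s : mul s (mul (star s) s) = s. Proof. exact (isg_star1 _ _ _ _ ISG s). Qed.
Lemma st2 s : mul (star s) (mul s (star s)) = star s. Proof. exact (isg_star2 _ _ _ _ ISG s). Qed.

Lemma star_star s : star (star s) = s.
Proof.
  symmetry. apply (isg_star_uniq _ _ _ _ ISG (star s) s).
  - rewrite cs; reflexivity.
  - rewrite ds; reflexivity.
  - apply st2.
  - apply st1.
Qed.

Lemma idem_star e : IDEM e -> star e = e.
Proof.
  intros [H1 H2]. symmetry. apply (isg_star_uniq _ _ _ _ ISG e e).
  - exact H1. - symmetry; exact H1.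
  - rewrite H2, H2; reflexivity. - rewrite H2, H2; reflexivity.
Qed.

Lemma idem_uniq e f : IDEM e -> IDEM f -> d e = d f -> e = f.
Proof.
  intros He Hf Hd. destruct (proj2 HG (d e)) as [u [_ Hu]].
  rewrite (Hu e (conj He eq_refl)), (Hu f (conj Hf (eq_sym Hd))). reflexivity.
Qed.

Lemma d_idl s : d (mul s (star s)) = c s.
Proof. rewrite dm by (rewrite cs; reflexivity). apply ds. Qed.
Lemma c_idl s : c (mul s (star s)) = c s.
Proof. apply cm. rewrite cs; reflexivity. Qed.
Lemma idl_idem s : IDEM (mul s (star s)).
Proof.
  split.
  - unfold composable. rewrite d_idl, c_idl. reflexivity.
  - rewrite asc. rewrite st2. reflexivity.
    rewrite cs; reflexivity. rewrite ds, c_idl; reflexivity.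
Qed.
Lemma idr_idem s : IDEM (mul (star s) s).
Proof. pose proof (idl_idem (star s)) as H. rewrite star_star in H. exact H. Qed.
Lemma d_idr s : d (mul (star s) s) = d s.
Proof. rewrite dm by (rewrite ds; reflexivity). reflexivity. Qed.
Lemma c_idr s : c (mul (star s) s) = d s.
Proof. rewrite cm by (rewrite ds; reflexivity). apply cs. Qed.

Lemma idem_dc e : IDEM e -> d e = c e.
Proof. intros [H _]. exact H. Qed.

Lemma lunit e s : IDEM e -> d e = c s -> mul e s = s.
Proof.
  intros He H. assert (e = mul s (star s)) as ->.
  { apply idem_uniq; auto using idl_idem. rewrite d_idl; auto. }
  rewrite asc. apply st1. rewrite cs; reflexivity. rewrite ds; reflexivity.
Qed.

Lemma runit e s : IDEM e -> c e = d s -> mul s e = s.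
Proof.
  intros He H. assert (e = mul (star s) s) as ->.
  { apply idem_uniq; auto using idr_idem. rewrite d_idr, idem_dc; auto. }
  apply st1.
Qed.

Lemma cancelL s p : d s = c p -> mul (star s) (mul s p) = p.
Proof.
  intro H. rewrite <- asc. apply lunit. apply idr_idem. rewrite d_idr; auto.
  rewrite ds; reflexivity. exact H.
Qed.

Lemma cancelR s p : c s = c p -> mul s (mul (star s) p) = p.
Proof.
  intro H. rewrite <- asc. apply lunit. apply idl_idem. rewrite d_idl; auto.
  rewrite cs; reflexivity. rewrite ds; auto.
Qed.

Lemma star_mul a b : d a = c b -> star (mul a b) = mul (star b) (star a).
Proof.
  intro H. symmetry. apply (isg_star_uniq _ _ _ _ ISG (mul a b) (mul (star b) (star a))).
  - rewrite dm by (rewrite ds, cs; auto). rewrite ds, cm; auto.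
  - rewrite cm by (rewrite ds, cs; auto). rewrite cs, dm; auto.
  - rewrite (asc (star b)) by (rewrite ?ds, ?cs, ?cm; auto).
    rewrite cancelL by auto. apply runit. apply idr_idem. rewrite c_idr, dm; auto.
  - assert (Hb : d b = c (mul (star b) (star a))).
    { rewrite cm, cs; [reflexivity|]. rewrite ds, cs; congruence. }
    rewrite (asc a b _ H Hb).
    rewrite cancelR by (rewrite cs; congruence). apply runit. apply idl_idem.
    rewrite c_idl, dm by (rewrite ds, cs; congruence). rewrite ds; reflexivity.
Qed.

Lemma pmaps s x : Xs (star s) x -> Xs s (th s x).
Proof. apply (pa_maps _ _ _ _ _ _ _ Hpa). Qed.
Lemma pinv s x : Xs (star s) x -> th (star s) (th s x) = x.
Proof. apply (pa_inv _ _ _ _ _ _ _ Hpa). Qed.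

Lemma th_id e x : IDEM e -> Xs e x -> th e x = x.
Proof.
  intros He Hx. pose proof (idem_star e He) as Hs.
  assert (Hx' : Xs (star e) x) by (rewrite Hs; exact Hx).
  assert (Hy : Xs (star e) (th e x)) by (rewrite Hs; apply pmaps; exact Hx').
  destruct (pa_comp _ _ _ _ _ _ _ Hpa e e x (idem_dc e He) Hx' Hy) as [_ H].
  rewrite (proj2 He) in H.
  symmetry. apply (pa_inj _ _ _ _ _ _ _ Hpa e x (th e x) Hx' Hy). exact H.
Qed.

Lemma Xs_idl s x : Xs s x -> Xs (mul s (star s)) x.
Proof.
  intro Hx.
  assert (H1 : Xs (star (star s)) x) by (rewrite star_star; exact Hx).
  assert (H2 : Xs (star s) (th (star s) x)) by (apply pmaps; exact H1).
  destruct (pa_comp _ _ _ _ _ _ _ Hpa s (star s) x) as [H3 _].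
  - unfold composable; rewrite cs; reflexivity.
  - exact H1.
  - exact H2.
  - rewrite idem_star in H3 by apply idl_idem. exact H3.
Qed.

Lemma ideal s x y : Xs s y -> LX x y -> Xs s x.
Proof. intros H1 H2. exact (proj1 Hord s x y H1 I H2). Qed.
Lemma oiso s x y : Xs (star s) x -> Xs (star s) y -> LX x y -> LX (th s x) (th s y).
Proof. intros H1 H2 H3. exact (proj1 (proj2 Hord s x y H1 H2) H3). Qed.

Let XS := proj1 HX.
Let Xid := proj2 HX.

Lemma leX_refl x : LX x x.
Proof.
  split; [reflexivity|split; [reflexivity|]]. exists x.
  destruct (Xid x) as [H1 H2]. split; [exact (Xid x)|split; [exact H1| symmetry; exact H2]].
Qed.

Lemma leX_self x y : LX x y -> mulX y x = x /\ dX x = dX y /\ cX x = cX y.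
Proof.
  intros [Hd [Hc [e [He [Hye Hx]]]]]. split; [|split; auto].
  destruct (Xid y) as [Hy1 Hy2].
  subst x. rewrite <- (isg_assoc _ _ _ _ XS y y e Hy1 Hye). rewrite Hy2. reflexivity.
Qed.

Lemma leX_trans x y z : LX x y -> LX y z -> LX x z.
Proof.
  intros Hxy Hyz. destruct (leX_self x y Hxy) as [E1 [D1 C1]].
  destruct (leX_self y z Hyz) as [E2 [D2 C2]].
  split; [congruence|split; [congruence|]]. exists x. split; [apply Xid|].
  destruct (Xid x) as [Hx1 Hx2]. destruct (Xid y) as [Hy1 Hy2]. destruct (Xid z) as [Hz1 Hz2].
  unfold composable in *.
  split. congruence.
  transitivity (mulX (mulX z y) x). { rewrite E2, E1; reflexivity. }
  rewrite (isg_assoc _ _ _ _ XS z y x) by (unfold composable; congruence).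
  rewrite E1. reflexivity.
Qed.

Lemma Xcomm e f : dX e = dX f -> mulX e f = mulX f e.
Proof.
  intro H.
  assert (HD : forall a, dX a = cX a) by (intro a; exact (proj1 (Xid a))).
  assert (HI : forall a, mulX a a = a) by (intro a; exact (proj2 (Xid a))).
  set (P := fun t => dX t = dX e /\ cX t = dX e).
  assert (Pe : P e) by (split; [reflexivity | symmetry; apply HD]).
  assert (Pf : P f) by (split; [symmetry; exact H| rewrite <- HD; symmetry; exact H]).
  assert (Cm : forall a b, P a -> P b -> dX a = cX b) by (intros a b [] []; congruence).
  assert (Pm : forall a b, P a -> P b -> P (mulX a b)).
  { intros a b Pa Pb. pose proof (Cm a b Pa Pb) as Hab. destruct Pa as [Ha1 Ha2], Pb as [Hb1 Hb2]. split.
    - rewrite (isg_dom _ _ _ _ XS) by exact Hab. exact Hb1.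
    - rewrite (isg_cod _ _ _ _ XS) by exact Hab. rewrite <- HD; exact Ha1. }
  assert (Ha : forall a b g, P a -> P b -> P g -> mulX (mulX a b) g = mulX a (mulX b g))
    by (intros; apply (isg_assoc _ _ _ _ XS); apply Cm; auto).
  assert (Hdup : forall a b, P a -> P b -> mulX a (mulX a b) = mulX a b)
    by (intros; rewrite <- Ha by auto; rewrite HI; reflexivity).
  assert (E1 : mulX f e = starX (mulX e f)).
  { apply (isg_star_uniq _ _ _ _ XS).
    - apply Cm; apply Pm; auto.
    - rewrite <- HD. rewrite (HD (mulX e f)). apply Cm; apply Pm; auto.
    - repeat rewrite Ha by (repeat apply Pm; assumption).
      repeat rewrite Hdup by (repeat apply Pm; assumption).
      rewrite <- (Ha e f (mulX e f)) by (repeat apply Pm; assumption). apply HI.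
    - repeat rewrite Ha by (repeat apply Pm; assumption).
      repeat rewrite Hdup by (repeat apply Pm; assumption).
      rewrite <- (Ha f e (mulX f e)) by (repeat apply Pm; assumption). apply HI. }
  assert (E2 : mulX e f = starX (mulX e f)).
  { apply (isg_star_uniq _ _ _ _ XS).
    - apply HD. - symmetry; apply HD. - rewrite !HI; reflexivity. - rewrite !HI; reflexivity. }
  congruence.
Qed.

Lemma leX_antisym x y : LX x y -> LX y x -> x = y.
Proof.
  intros Hxy Hyx. destruct (leX_self x y Hxy) as [E1 [D1 _]].
  destruct (leX_self y x Hyx) as [E2 _].
  transitivity (mulX y x). symmetry; exact E1. rewrite Xcomm. exact E2. congruence.
Qed.


Local Notation DS := (Dset mul star Xs).
Local Notation AP := (glob_approx d c mul star Xs th).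
Local Notation SIM := (glob_sim d c mul star Xs th).
Local Notation CL := (cls d c mul star Xs th).

Definition idl s := mul s (star s).

Definition R1 (p q : A * X) : Prop :=
  DS p /\ DS q /\ c (fst q) = c (fst p) /\ Xs (mul (star (fst p)) (fst q)) (snd p) /\
  th (mul (star (fst q)) (fst p)) (snd p) = snd q.

Definition W (p q : A * X) : Prop :=
  R1 p q \/ exists z, R1 p (idl (fst p), z) /\ R1 q (idl (fst q), z).

Lemma starm a b : c a = c b -> star (mul (star a) b) = mul (star b) a.
Proof. intro H. rewrite star_mul by (rewrite ds; exact H). rewrite star_star. reflexivity. Qed.

Lemma idl_eq s t : c s = c t -> idl s = idl t.
Proof. intro H. apply idem_uniq; try apply idl_idem. unfold idl. rewrite !d_idl. exact H. Qed.

Lemma DS_idem e z : IDEM e -> (DS (e, z) <-> Xs e z).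
Proof. intro He. unfold Dset; simpl. rewrite (idem_star e He), (proj2 He). tauto. Qed.

Lemma R1_refl p : DS p -> R1 p p.
Proof.
  destruct p as [s x]. intro H. unfold R1; simpl.
  repeat split; auto. apply th_id; auto. apply idr_idem.
Qed.

Lemma R1_sym p q : R1 p q -> R1 q p.
Proof.
  destruct p as [s x], q as [t y]. unfold R1; simpl. intros [H1 [H2 [H3 [H4 H5]]]].
  assert (Hst : star (mul (star t) s) = mul (star s) t) by (apply starm; auto).
  repeat split; auto.
  - rewrite <- H5. apply pmaps. rewrite Hst. exact H4.
  - rewrite <- H5. rewrite <- Hst. apply pinv. rewrite Hst. exact H4.
Qed.

Lemma R1_trans p q r : R1 p q -> R1 q r -> R1 p r.
Proof.
  destruct p as [s x], q as [t y], r as [u z]. unfold R1; simpl.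
  intros [H1 [H2 [H3 [H4 H5]]]] [G1 [G2 [G3 [G4 G5]]]].
  assert (Hcomp : d (mul (star u) t) = c (mul (star t) s)).
  { rewrite dm by (rewrite ds; congruence). rewrite cm by (rewrite ds; congruence). rewrite cs; reflexivity. }
  assert (Hm : mul (mul (star u) t) (mul (star t) s) = mul (star u) s).
  { rewrite asc. rewrite cancelR by congruence. reflexivity.
    rewrite ds; congruence. rewrite cm by (rewrite ds; congruence). rewrite cs; reflexivity. }
  destruct (pa_comp _ _ _ _ _ _ _ Hpa (mul (star u) t) (mul (star t) s) x Hcomp) as [K1 K2].
  - rewrite starm by congruence. exact H4.
  - rewrite starm by congruence. rewrite H5. exact G4.
  - rewrite Hm in K1, K2. rewrite starm in K1 by congruence.
    repeat split; auto. congruence. rewrite K2, H5. exact G5.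
Qed.

Lemma R1_cod p q : R1 p q -> c (fst q) = c (fst p).
Proof. intros [_ [_ [H _]]]. exact H. Qed.
Lemma R1_DSl p q : R1 p q -> DS p. Proof. intros [H _]. exact H. Qed.
Lemma R1_DSr p q : R1 p q -> DS q. Proof. intros [_ [H _]]. exact H. Qed.

Lemma R1_idl s x : DS (s, x) -> Xs (star s) x -> R1 (s, x) (idl s, th s x).
Proof.
  intros H1 H2. unfold R1; simpl.
  assert (Hi : star (idl s) = idl s) by (apply idem_star; apply idl_idem).
  repeat split; auto.
  - apply DS_idem. apply idl_idem. apply Xs_idl. apply pmaps; auto.
  - unfold idl. apply c_idl.
  - unfold idl. rewrite st2. exact H2.
  - rewrite Hi. unfold idl. rewrite lunit; auto. apply idl_idem. apply d_idl.
Qed.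

Lemma R1_idl_inv s x z : R1 (s, x) (idl s, z) -> Xs (star s) x /\ th s x = z.
Proof.
  unfold R1; simpl. intros [_ [_ [_ [H4 H5]]]].
  assert (Hi : star (idl s) = idl s) by (apply idem_star; apply idl_idem).
  unfold idl in *. rewrite st2 in H4. rewrite Hi in H5. rewrite lunit in H5.
  split; auto. apply idl_idem. apply d_idl.
Qed.

Lemma R1_idem e a f z : IDEM e -> IDEM f -> R1 (e, a) (f, z) -> a = z.
Proof.
  intros He Hf [H1 [H2 [H3 [H4 H5]]]]. simpl in *.
  assert (f = e) as ->.
  { apply idem_uniq; auto. rewrite (idem_dc f Hf), (idem_dc e He). exact H3. }
  rewrite (idem_star e He), (proj2 He) in H5. rewrite <- H5.
  symmetry. apply th_id; auto. apply (DS_idem e a He). exact H1.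
Qed.

Lemma idl_idl s : idl (idl s) = idl s.
Proof. unfold idl. rewrite (idem_star _ (idl_idem s)). exact (proj2 (idl_idem s)). Qed.

Lemma idem_idl e : IDEM e -> idl e = e.
Proof. intro He. unfold idl. rewrite (idem_star e He). exact (proj2 He). Qed.

Lemma sim_W p q : SIM p q -> W p q.
Proof.
  destruct p as [s x], q as [t y]. unfold glob_sim; simpl.
  intros [H1 [H2 [[K1 [K2 K3]] | [K1 [K2 K3]]]]].
  - left. unfold R1; simpl. repeat split; auto. rewrite <- (ds t). exact K1.
  - right. exists x. simpl. rewrite (idem_idl s K1), (idem_idl t K2). subst y.
    split; apply R1_refl; auto.
Qed.

Lemma W_sym p q : W p q -> W q p.
Proof.
  intros [H | [z [H1 H2]]]. left; apply R1_sym; auto. right; exists z; auto.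
Qed.

Lemma W_trans p q r : W p q -> W q r -> W p r.
Proof.
  intros [H | [z [H1 H2]]] [G | [z' [G1 G2]]].
  - left. eapply R1_trans; eauto.
  - right. exists z'. split; auto. rewrite (idl_eq (fst p) (fst q)).
    eapply R1_trans; eauto. symmetry. apply R1_cod; auto.
  - right. exists z. split; auto. rewrite (idl_eq (fst r) (fst q)).
    eapply R1_trans; [apply R1_sym; exact G|exact H2]. apply R1_cod; auto.
  - right. exists z. split; auto.
    assert (Hz : z = z').
    { assert (Rq : R1 (idl (fst q), z) (idl (fst q), z')).
      { eapply R1_trans; [apply R1_sym; exact H2 | exact G1]. }
      apply (R1_idem _ _ _ _ (idl_idem _) (idl_idem _) Rq). }
    subst z'. exact G2.
Qed.

Lemma R1_sim p q : R1 p q -> SIM p q.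
Proof.
  destruct p as [s x], q as [t y]. intros [H1 [H2 [H3 [H4 H5]]]]. simpl in *.
  unfold glob_sim; simpl. repeat split; auto. left. repeat split; auto. rewrite ds; auto.
Qed.

Lemma W_AP p q : W p q -> AP p q.
Proof.
  intros [H | [z [H1 H2]]].
  - apply rst_step. apply R1_sim; auto.
  - apply rst_trans with (idl (fst p), z). apply rst_step; apply R1_sim; auto.
    apply rst_trans with (idl (fst q), z).
    + apply rst_step. unfold glob_sim; simpl. split; [eapply R1_DSr; eauto|].
      split; [eapply R1_DSr; eauto|]. right. split; [apply idl_idem|split; [apply idl_idem|reflexivity]].
    + apply rst_sym. apply rst_step. apply R1_sim; auto.
Qed.

Lemma AP_cases p q : AP p q -> p = q \/ W p q.
Proof.
  unfold glob_approx. intro H. induction H.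
  - right. apply sim_W; auto.
  - left; reflexivity.
  - destruct IHclos_refl_sym_trans as [-> | H']. left; reflexivity. right; apply W_sym; auto.
  - destruct IHclos_refl_sym_trans1 as [-> | H1]; destruct IHclos_refl_sym_trans2 as [-> | H2]; auto.
    right; eapply W_trans; eauto.
Qed.

Lemma W_DSl p q : W p q -> DS p.
Proof. intros [H | [z [H _]]]; eapply R1_DSl; eauto. Qed.
Lemma W_DSr p q : W p q -> DS q.
Proof. intros [H | [z [_ H]]]. eapply R1_DSr; eauto. eapply R1_DSl; eauto. Qed.

Lemma AP_DSl p q : AP p q -> DS q -> DS p.
Proof. intros H Hq. destruct (AP_cases p q H) as [-> | H']; auto. eapply W_DSl; eauto. Qed.
Lemma AP_DSr p q : AP p q -> DS p -> DS q.
Proof. intros H Hq. destruct (AP_cases p q H) as [-> | H']; auto. eapply W_DSr; eauto. Qed.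

Lemma same_cod p q : AP p q -> DS p -> c (fst p) = c (fst q) -> R1 p q.
Proof.
  intros H Hp Hc. destruct (AP_cases p q H) as [<- | [H' | [z [H1 H2]]]].
  - apply R1_refl; auto.
  - exact H'.
  - rewrite (idl_eq (fst p) (fst q) Hc) in H1. eapply R1_trans; [exact H1| apply R1_sym; exact H2].
Qed.

Lemma AP_sym p q : AP p q -> AP q p.
Proof. apply rst_sym. Qed.
Lemma AP_trans p q r : AP p q -> AP q r -> AP p r.
Proof. apply rst_trans. Qed.
Lemma AP_refl p : AP p p.
Proof. apply rst_refl. Qed.

Lemma cls_eq p q : AP p q -> CL p = CL q.
Proof.
  intro H. extensionality r. apply propositional_extensionality. unfold cls. split; intro K.
  - eapply AP_trans; [apply AP_sym; exact H| exact K].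
  - eapply AP_trans; [exact H| exact K].
Qed.

Lemma cls_ap p q : CL p = CL q -> AP p q.
Proof.
  intro H. pose proof (f_equal (fun f => f q) H) as K. simpl in K. unfold cls in K.
  rewrite K. apply AP_refl.
Qed.


Local Notation ES := (Es d c mul star Xs th).
Local Notation ET := (eta d c mul star Xs th).
Local Notation EC := (Ecar d c mul star Xs th).
Local Notation IO := (iota d c mul star Xs th).
Local Notation LE := (leE d c mul star Xs th LX).

Lemma Dsub_iff s p : Dsub d c mul star Xs s p <-> DS p /\ c (fst p) = c s.
Proof.
  destruct p as [t x]. unfold Dsub; simpl. split.
  - intros [H1 [H2 _]]. split; auto. rewrite <- H2, ds; reflexivity.
  - intros [H1 H2]. split; auto. split. rewrite ds; auto.
    change (mul s (star s)) with (idl s). rewrite (idl_eq s t) by auto.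
    unfold idl. rewrite (lunit (mul t (star t)) t). exact H1. apply idl_idem. apply d_idl.
Qed.

Lemma ES_iff s C : ES s C <-> exists p, DS p /\ c (fst p) = c s /\ C = CL p.
Proof.
  unfold Es. split.
  - intros [p [Hp ->]]. apply Dsub_iff in Hp. exists p; tauto.
  - intros [p [H1 [H2 ->]]]. exists p. split; auto. apply Dsub_iff; auto.
Qed.

Lemma DS_mul s p : DS p -> d s = c (fst p) -> DS (mul s (fst p), snd p).
Proof.
  destruct p as [t x]. unfold Dset; simpl. intros H1 H2.
  assert (E : mul (star (mul s t)) (mul s t) = mul (star t) t).
  { apply idem_uniq; try apply idr_idem. rewrite !d_idr. apply dm; auto. }
  rewrite E; exact H1.
Qed.

Lemma ml s a b : d s = c a -> d s = c b -> mul (star (mul s a)) (mul s b) = mul (star a) b.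
Proof.
  intros Ha Hb. rewrite star_mul by auto. rewrite asc.
  rewrite cancelL by auto. reflexivity.
  rewrite ds, cs; auto. rewrite ds, cm; auto.
Qed.

Lemma R1_lmul s p q : R1 p q -> d s = c (fst p) -> R1 (mul s (fst p), snd p) (mul s (fst q), snd q).
Proof.
  intros H Hs. pose proof (R1_cod p q H) as Hc.
  destruct p as [t x], q as [u y]. destruct H as [H1 [H2 [H3 [H4 H5]]]]. simpl in *.
  unfold R1; simpl. split; [apply (DS_mul s (t,x)); auto|].
  split; [apply (DS_mul s (u,y)); simpl; congruence|].
  rewrite !ml by congruence. repeat split; auto.
  rewrite !cm by congruence. reflexivity.
Qed.

Lemma eta_cls s p : DS p -> c (fst p) = d s -> ET s (CL p) = CL (mul s (fst p), snd p).
Proof.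
  intros Hp Hc. unfold eta. extensionality q. apply propositional_extensionality. split.
  - intros [p' [Hpp' [Hsub Hap]]]. apply Dsub_iff in Hsub. destruct Hsub as [Hp' Hc'].
    rewrite cs in Hc'. unfold cls in Hpp'.
    assert (R : R1 p p') by (apply same_cod; auto; congruence).
    unfold cls. eapply AP_trans; [|exact Hap]. apply W_AP. left. apply R1_lmul; auto.
  - intro H. exists p. split; [apply AP_refl|]. split; [apply Dsub_iff; rewrite cs; auto| exact H].
Qed.

Lemma Es_maps s C : ES (star s) C -> ES s (ET s C).
Proof.
  intro H. apply ES_iff in H. destruct H as [p [H1 [H2 ->]]]. rewrite cs in H2.
  rewrite eta_cls by auto. apply ES_iff. exists (mul s (fst p), snd p).
  split; [apply DS_mul; auto|]. split; auto. simpl. apply cm; auto.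
Qed.

Lemma eta_inv s C : ES (star s) C -> ET (star s) (ET s C) = C.
Proof.
  intro H. apply ES_iff in H. destruct H as [p [H1 [H2 ->]]]. rewrite cs in H2.
  rewrite eta_cls by auto. rewrite eta_cls.
  - simpl. rewrite cancelL by auto. destruct p; reflexivity.
  - apply DS_mul; auto.
  - simpl. rewrite cm by auto. rewrite ds; reflexivity.
Qed.

Lemma Es_surj s C : ES s C -> exists C', ES (star s) C' /\ ET s C' = C.
Proof.
  intro H. apply ES_iff in H. destruct H as [p [H1 H2 ]]. destruct H2 as [H2 ->].
  exists (CL (mul (star s) (fst p), snd p)).
  assert (HD : DS (mul (star s) (fst p), snd p)) by (apply DS_mul; auto; rewrite ds; auto).
  split.
  - apply ES_iff. eexists; split; [exact HD|]. split; auto. simpl. apply cm. rewrite ds; auto.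
  - rewrite eta_cls; auto. simpl. rewrite cancelR by auto. destruct p; reflexivity.
    simpl. rewrite cm, cs; auto. rewrite ds; auto.
Qed.

Lemma eta_comp s t C : d s = c t -> ES (star t) C -> ES (star s) (ET t C) ->
  ES (star (mul s t)) C /\ ET (mul s t) C = ET s (ET t C).
Proof.
  intros Hst H _. apply ES_iff in H. destruct H as [p [H1 [H2 ->]]]. rewrite cs in H2.
  split.
  - apply ES_iff. exists p. split; auto. split; auto. rewrite cs, dm; auto.
  - rewrite (eta_cls t) by auto. rewrite eta_cls; auto.
    + rewrite eta_cls; [simpl; rewrite asc; [reflexivity|congruence|congruence] | apply DS_mul; congruence | simpl; rewrite cm; congruence].
    + rewrite dm; congruence.
Qed.

Lemma eta_glob s t C : d s = c t -> ES (star (mul s t)) C -> ES (star t) C /\ ES (star s) (ET t C).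
Proof.
  intros Hst H. apply ES_iff in H. destruct H as [p [H1 [H2 ->]]]. rewrite cs, dm in H2 by auto.
  split.
  - apply ES_iff. exists p. split; auto. split; auto. rewrite cs; auto.
  - rewrite eta_cls by auto. apply ES_iff. exists (mul t (fst p), snd p).
    split; [apply DS_mul; congruence|].
    split; [|reflexivity]. simpl. rewrite cm, cs; congruence.
Qed.

Lemma ex_idem x : exists e, IDEM e /\ Xs e x.
Proof.
  destruct (pa_cover _ _ _ _ _ _ _ Hpa x I) as [s Hs].
  exists (mul s (star s)). split. apply idl_idem. apply Xs_idl; auto.
Qed.

Lemma iota_eq e x : IDEM e -> Xs e x -> IO x = CL (e, x).
Proof.
  intros He Hx. unfold iota. extensionality q. apply propositional_extensionality. split.
  - intros [e' [He' [Hx' Hap]]]. unfold cls. eapply AP_trans; [|exact Hap].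
    apply rst_step. unfold glob_sim; simpl. split; [apply DS_idem; auto|].
    split; [apply DS_idem; auto|]. right; auto.
  - intro H. exists e. auto.
Qed.

Lemma T1 r y' q x' : R1 (r, y') q -> LX x' y' ->
  exists x'', DS (fst q, x'') /\ LX x'' (snd q) /\ R1 (r, x') (fst q, x'').
Proof.
  destruct q as [t y]. intros [H1 [H2 [H3 [H4 H5]]]] Hle. simpl in *.
  assert (Hs : star (mul (star t) r) = mul (star r) t) by (apply starm; auto).
  assert (K : Xs (mul (star r) t) x') by (eapply ideal; eauto).
  assert (HD : DS (t, th (mul (star t) r) x')).
  { unfold Dset; simpl.
    assert (E : mul (star t) t = mul (mul (star t) r) (star (mul (star t) r))).
    { apply idem_uniq; try apply idr_idem; try apply idl_idem. rewrite d_idr, d_idl.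
      rewrite cm by (rewrite ds; congruence). rewrite cs; reflexivity. }
    rewrite E. apply Xs_idl. apply pmaps. rewrite Hs; auto. }
  exists (th (mul (star t) r) x'). split; [exact HD|split].
  - rewrite <- H5. apply oiso; auto; rewrite Hs; auto.
  - unfold R1; simpl. repeat split; auto.
    unfold Dset in *; simpl in *. eapply ideal; eauto.
Qed.

Lemma transport r y' x' q : DS (r, y') -> AP (r, y') q -> LX x' y' ->
  exists x'', DS (fst q, x'') /\ LX x'' (snd q) /\ AP (r, x') (fst q, x'').
Proof.
  intros Hd Hap Hle. destruct (AP_cases _ _ Hap) as [<- | [H | [z [H1 H2]]]].
  - exists x'. simpl. split; [|split; auto; apply AP_refl].
    unfold Dset in *; simpl in *. eapply ideal; eauto.
  - destruct (T1 r y' q x' H Hle) as [x'' [K1 [K2 K3]]]. exists x''. split; [auto|split; [auto|]].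
    apply W_AP; left; auto.
  - simpl in H1. destruct (T1 r y' _ x' H1 Hle) as [w [K1 [K2 K3]]]. simpl in *.
    assert (Hz : Xs (idl (fst q)) z).
    { apply (DS_idem _ _ (idl_idem _)). eapply R1_DSr; eauto. }
    assert (Hw : Xs (idl (fst q)) w) by (eapply ideal; eauto).
    assert (R : R1 (idl (fst q), z) q) by (apply R1_sym; auto).
    destruct (T1 _ z q w R K2) as [x'' [L1 [L2 L3]]].
    exists x''. split; [auto|split; [auto|]].
    eapply AP_trans; [apply W_AP; left; exact K3|].
    eapply AP_trans; [|apply W_AP; left; exact L3].
    apply rst_step. unfold glob_sim; simpl. split; [auto|].
    split; [apply DS_idem; auto; apply idl_idem|]. right.
    split; [apply idl_idem|split; [apply idl_idem|reflexivity]].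
Qed.

Lemma leE_char C q : LE C (CL q) -> DS q ->
  exists x'', DS (fst q, x'') /\ LX x'' (snd q) /\ C = CL (fst q, x'').
Proof.
  unfold leE. intros [s [x [t [y [Hsx [HC [Hty [HC' [r [y' [x' [Hry [Hap1 [Hle Hap2]]]]]]]]]]]]]] Hq.
  assert (Hq' : AP (r, y') q).
  { eapply AP_trans; [exact Hap1|]. apply AP_sym. apply cls_ap. exact HC'. }
  destruct (transport r y' x' q Hry Hq' Hle) as [x'' [K1 [K2 K3]]].
  exists x''. split; [auto|split; [auto|]]. rewrite HC. apply cls_eq.
  eapply AP_trans; [apply AP_sym; exact Hap2| exact K3].
Qed.

Lemma leE_intro t x y : DS (t, x) -> DS (t, y) -> LX x y -> LE (CL (t, x)) (CL (t, y)).
Proof.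
  intros H1 H2 H3. unfold leE. exists t, x, t, y.
  split; [auto|split;[reflexivity|split;[auto|split;[reflexivity|]]]].
  exists t, y, x. split;[auto|split;[apply AP_refl|split;[auto|apply AP_refl]]].
Qed.

Lemma R1_same t b y : R1 (t, b) (t, y) -> b = y.
Proof.
  intros [H1 [_ [_ [_ H5]]]]. simpl in *. rewrite <- H5. symmetry. apply th_id; auto. apply idr_idem.
Qed.

Lemma eta_mono s C C' : ES (star s) C -> ES (star s) C' -> LE C C' -> LE (ET s C) (ET s C').
Proof.
  intros H H' Hle. apply ES_iff in H'. destruct H' as [q [Q1 [Q2 ->]]]. rewrite cs in Q2.
  destruct (leE_char C q Hle Q1) as [x'' [K1 [K2 ->]]].
  rewrite !eta_cls by auto. simpl. destruct q as [t y]. simpl in *.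
  apply leE_intro; auto. apply (DS_mul s (t, x'')); auto. apply (DS_mul s (t, y)); auto.
Qed.

Lemma iota_inj a b : IO a = IO b -> a = b.
Proof.
  intro H. destruct (ex_idem a) as [e [He Ha]]. destruct (ex_idem b) as [f [Hf Hb]].
  rewrite (iota_eq e a He Ha), (iota_eq f b Hf Hb) in H. apply cls_ap in H.
  destruct (AP_cases _ _ H) as [E | [K | [z [K1 K2]]]].
  - injection E; auto.
  - exact (R1_idem e a f b He Hf K).
  - simpl in K1, K2. rewrite (idem_idl e He) in K1. rewrite (idem_idl f Hf) in K2.
    transitivity z. exact (R1_idem e a e z He He K1). symmetry; exact (R1_idem f b f z Hf Hf K2).
Qed.


Lemma main_sec (Hne : forall g : A, exists x, Xs g x) :
  mcalister_triple d c mul star EC LE (fun C => exists x : X, C = IO x) ES ET.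
Proof.
  unfold mcalister_triple.
  split; [exact HG|].
  split.
  {
    split; [|split].
    - intros C [[t y] [Hp ->]]. apply leE_intro; auto. apply leX_refl.
    - intros C C' _ [[t y] [Hq ->]] H1 H2.
      destruct (leE_char C (t, y) H1 Hq) as [a [Ka [La ->]]]. simpl in *.
      destruct (leE_char _ (t, a) H2 Ka) as [b [Kb [Lb Eb]]]. simpl in *.
      assert (Hby : b = y).
      { apply (R1_same t). apply same_cod; auto. apply cls_ap. symmetry; exact Eb. }
      subst b. rewrite (leX_antisym a y La Lb). reflexivity.
    - intros C C' C'' _ _ [[t y] [Hq ->]] H1 H2.
      destruct (leE_char C' (t, y) H2 Hq) as [a [Ka [La ->]]]. simpl in *.
      destruct (leE_char C (t, a) H1 Ka) as [b [Kb [Lb ->]]]. simpl in *.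
      apply leE_intro; auto. eapply leX_trans; eauto. }
  split.
  { intros C [x ->]. destruct (ex_idem x) as [e [He Hx]]. rewrite (iota_eq e x He Hx).
    exists (e, x). split; auto. apply DS_idem; auto. }
  split.
  { intros C C' [y ->] _ Hle. destruct (ex_idem y) as [e [He Hy]].
    rewrite (iota_eq e y He Hy) in Hle.
    destruct (leE_char C (e, y) Hle (proj2 (DS_idem e y He) Hy)) as [x'' [K1 [K2 ->]]].
    simpl in *. exists x''. symmetry. apply iota_eq; auto. apply (DS_idem e x'' He). exact K1. }
  split.
  { exists OX, X, dX, cX, mulX, starX, IO. split; [exact HX|].
    split; [intro a; exists a; reflexivity|].
    split; [exact iota_inj|].
    split; [intros C [x ->]; exists x; reflexivity|].
    intros a b. destruct (ex_idem b) as [e [He Hb]]. split.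
    - intro Hab. assert (Ha : Xs e a) by (eapply ideal; eauto).
      rewrite (iota_eq e a He Ha), (iota_eq e b He Hb).
      apply leE_intro; auto; apply DS_idem; auto.
    - intro Hle. rewrite (iota_eq e b He Hb) in Hle.
      destruct (leE_char _ (e, b) Hle (proj2 (DS_idem e b He) Hb)) as [x'' [K1 [K2 K3]]].
      simpl in *. apply (DS_idem e x'' He) in K1.
      rewrite <- (iota_eq e x'' He K1) in K3. apply iota_inj in K3. subst; exact K2. }
  split.
  {
    split.
    - constructor.
      + intros s C H. apply ES_iff in H. destruct H as [p [H1 [_ ->]]]. exists p; auto.
      + intros s C H. apply Es_maps; auto.
      + intros s C C' H H' E. rewrite <- (eta_inv s C H), <- (eta_inv s C' H'), E. reflexivity.
      + intros s C H. apply Es_surj; auto.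
      + intros s C H. apply eta_inv; auto.
      + intros C [p [Hp ->]]. exists (fst p). apply ES_iff. exists p; auto.
      + intros s t C Hst H1 H2. apply eta_comp; auto.
      + intros s t C [_ [Hc _]] H. apply ES_iff in H. destruct H as [p [H1 [H2 ->]]].
        apply ES_iff. exists p. split; auto. split; auto. congruence.
    - intros s t C Hst H. apply eta_glob; auto. }
  split.
  { split.
    - intros s C C' H _ Hle. apply ES_iff in H. destruct H as [q [Q1 [Q2 ->]]].
      destruct (leE_char C q Hle Q1) as [x'' [K1 [K2 ->]]].
      apply ES_iff. eexists; split; [exact K1|]. split; [exact Q2|reflexivity].
    - intros s C C' H H'. split.
      + apply eta_mono; auto.
      + intro Hle.
        assert (G : ES (star (star s)) (ET s C)) by (rewrite star_star; apply Es_maps; auto).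
        assert (G' : ES (star (star s)) (ET s C')) by (rewrite star_star; apply Es_maps; auto).
        pose proof (eta_mono (star s) _ _ G G' Hle) as K.
        rewrite !eta_inv in K by auto. exact K. }
  split.
  { intro C. split.
    - intros [[t x] [Hp ->]]. exists t, (IO x). unfold Dset in Hp; simpl in Hp.
      rewrite (iota_eq _ x (idr_idem t) Hp).
      split; [exists x; symmetry; apply iota_eq; auto; apply idr_idem|].
      split.
      + apply ES_iff. exists (mul (star t) t, x). split; [apply DS_idem; auto; apply idr_idem|].
        split; [simpl; rewrite cs; apply c_idr|reflexivity].
      + rewrite eta_cls; simpl.
        * rewrite st1. reflexivity.
        * apply DS_idem; auto; apply idr_idem.
        * apply c_idr.
    - intros [g [y [_ [H ->]]]]. apply Es_maps in H. apply ES_iff in H.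
      destruct H as [p [H1 [_ ->]]]. exists p; auto. }
  { intro g. destruct (Hne (star g)) as [x Hx].
    assert (Hx' : Xs (mul (star g) g) x).
    { pose proof (Xs_idl _ _ Hx) as K. rewrite star_star in K. exact K. }
    exists (IO x). rewrite (iota_eq _ x (idr_idem g) Hx').
    split; [exists x; symmetry; apply iota_eq; auto; apply idr_idem|].
    split.
    - apply ES_iff. exists (mul (star g) g, x). split; [apply DS_idem; auto; apply idr_idem|].
      split; [simpl; rewrite cs; apply c_idr|reflexivity].
    - rewrite eta_cls; simpl.
      + rewrite st1. exists (th g x). symmetry.
        assert (Hy : Xs (idl g) (th g x)) by (apply Xs_idl; apply pmaps; auto).
        rewrite (iota_eq _ _ (idl_idem g) Hy). apply cls_eq. apply W_AP. left.
        apply R1_sym. apply R1_idl; auto.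
      + apply DS_idem; auto; apply idr_idem.
      + apply c_idr. }
Qed.

End Main.

Theorem mainTheorem9
  (O A OX X : Type)
  (d c : A -> O) (mul : A -> A -> A) (star : A -> A)
  (dX cX : X -> OX) (mulX : X -> X -> X) (starX : X -> X)
  (Xs : A -> X -> Prop) (th : A -> X -> X)
  (HG : is_groupoid d c mul star)
  (HX : is_semilatticeoid dX cX mulX starX)
  (Hpa : partial_action d c mul star (fun _ : X => True) Xs th)
  (Hord : ordered_action star (fun _ : X => True) (natle dX cX mulX) Xs th)
  (Hne : forall g : A, exists x, Xs g x) :
  mcalister_triple d c mul star
    (Ecar d c mul star Xs th)
    (leE d c mul star Xs th (natle dX cX mulX))
    (fun C => exists x : X, C = iota d c mul star Xs th x)
    (Es d c mul star Xs th)
    (eta d c mul star Xs th).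
Proof.
  exact (main_sec d c mul star dX cX mulX starX Xs th HG HX Hpa Hord Hne).
Qed.
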